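(* Let $(N,\langle\,,\rangle)$ be a symplectic $L$-vector space of dimension $2n$. Let $\bar J\subset\mathbf Z/2n\mathbf Z$ be non-empty and symmetric with inverse image $J\subset\mathbf Z$, let $k\in J$ with $k+1\notin J$, let $\bar I=\bar J\cup\{\overline{k+1},\overline{-(k+1)}\}$, and let $\ell$ be the smallest element of $J$ with $\ell>k$. Let $f:X^G_{\bar I}\to X^G_{\bar J}$ be the forgetful map and let $\mathbf M=(M_i)_{i\in J}\in X^G_{\bar J}$. Then the map $(M_i)_{i\in I}\mapsto M_{k+1}$ is a bijection from $f^{-1}(\mathbf M)$ onto the set of $O_L$-lattices $M$ in $N$ with $M_k\subset M\subset M_\ell$ and $\dim_{\mathbf F}M/M_k=1$.
   Context: $L$ is the completion of the maximal unramified extension of a finite extension $F$ of $\mathbf Q_p$, $\pi$ a uniformizer of $F$, $O_L$ the integers of $L$, $\mathbf F$ its residue field. For an $O_L$-lattice $\Lambda$, $\Lambda^\perp=\{x\in N:\langle x,\Lambda\rangle\subset O_L\}$. A subset of $\mathbf Z/2n\mathbf Z$ is symmetric if stable under $x\mapsto-x$; $\bar m$ denotes the class of $m\in\mathbf Z$. For non-empty $\bar I$ with inverse image $I$, a periodic lattice chain of type $\bar I$ is a family of $O_L$-lattices $(M_i)_{i\in I}$ with $M_i\subset M_{i'}$, $\mathrm{length}(M_{i'}/M_i)=i'-i$ for $i<i'$ in $I$, and $M_{i+2n}=\pi^{-1}M_i$; it is selfdual if there is $d\in\mathbf Z$ with $M_i^\perp=M_{-i+2nd}$ for all $i\in I$.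 $X^G_{\bar I}$ denotes the set of selfdual periodic lattice chains of type $\bar I$ in $N$. *)

(* Defs.v *)
From HB Require Import structures.
From mathcomp Require Import all_boot all_order all_algebra.
Set Implicit Arguments.
Unset Strict Implicit.
Unset Printing Implicit Defensive.
Import Order.TTheory GRing.Theory Num.Theory.
Local Open Scope ring_scope.

(* A discrete valuation ring O inside its fraction field L, with
   uniformizer pi: O is a subring, pi is a non-unit of O, and every
   nonzero x in L is u * pi^z with u a unit of O and z an integer. *)
Record dvr (L : fieldType) := DVR {
  dvr_O : L -> Prop;
  dvr_pi : L;
  dvr_O0 : dvr_O 0;
  dvr_O1 : dvr_O 1;
  dvr_OB : forall x y, dvr_O x -> dvr_O y -> dvr_O (x - y);
  dvr_OM : forall x y, dvr_O x -> dvr_O y -> dvr_O (x * y);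
  dvr_piO : dvr_O dvr_pi;
  dvr_pi_neq0 : dvr_pi != 0;
  dvr_pi_nonunit : ~ dvr_O (dvr_pi^-1);
  dvr_fact : forall x, x != 0 ->
    exists (u : L) (z : int), [/\ dvr_O u, dvr_O u^-1 & x = u * dvr_pi ^ z]
}.

Record symplectic (L : fieldType) (N : vectType L) := Symplectic {
  sform : N -> N -> L;
  sform_linl : forall a x y z, sform (a *: x + y) z = a * sform x z + sform y z;
  sform_linr : forall a x y z, sform z (a *: x + y) = a * sform z x + sform z y;
  sform_alt : forall x, sform x x = 0;
  sform_nondeg : forall x, (forall y, sform x y = 0) -> x = 0
}.

Section Lattices.
Variables (L : fieldType) (D : dvr L) (N : vectType L) (S : symplectic N).

Definition same (A B : N -> Prop) := forall x, A x <-> B x.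
Definition lsubset (A B : N -> Prop) := forall x, A x -> B x.

Definition Osubmod (P : N -> Prop) :=
  [/\ P 0, (forall x y, P x -> P y -> P (x + y))
      & (forall a x, dvr_O D a -> P x -> P (a *: x))].

Definition Ospan (s : seq N) : N -> Prop := fun x =>
  exists a : 'I_(size s) -> L,
    (forall i, dvr_O D (a i)) /\ x = \sum_(i < size s) a i *: s`_i.

Definition is_lattice (M : N -> Prop) :=
  exists s : seq N, same M (Ospan s) /\ <<s>>%VS = fullv.

(* length(B/A) = m: a composition series A = P_0 < ... < P_m = B of
   O_L-submodules with simple successive quotients. *)
Definition has_length (A B : N -> Prop) (m : nat) :=
  exists P : nat -> N -> Prop,
    [/\ same (P 0%N) A, same (P m) B,
        (forall j, (j <= m)%N -> Osubmod (P j)) &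
        (forall j, (j < m)%N ->
           [/\ lsubset (P j) (P j.+1), ~ lsubset (P j.+1) (P j) &
               forall Q, Osubmod Q -> lsubset (P j) Q -> lsubset Q (P j.+1) ->
                 same Q (P j) \/ same Q (P j.+1)])].

(* dim_F (B/A) = 1, for A a lsubset of B: B/A is killed by pi and is spanned
   over F = O/pi by the class of one element x not in A. *)
Definition dim1 (A B : N -> Prop) :=
  lsubset (fun x => exists y, B y /\ x = dvr_pi D *: y) A /\
  exists x, [/\ B x, ~ A x &
    forall y, B y -> exists a, dvr_O D a /\ A (y - a *: x)].

Definition perp (M : N -> Prop) : N -> Prop :=
  fun x => forall y, M y -> dvr_O D (sform S x y).

(* Selfdual periodic lattice chain of type I (I a lsubset of Z, the
   inverse image of a lsubset of Z/2nZ); the family M is only relevant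
   on I. *)
Definition selfdual_chain (n : nat) (I : int -> Prop) (M : int -> N -> Prop) :=
  [/\ (forall i, I i -> is_lattice (M i)),
      (forall i i', I i -> I i' -> i < i' ->
          lsubset (M i) (M i') /\ has_length (M i) (M i') `|i' - i|%N),
      (forall i, I i -> same (M (i + (2 * n)%N%:Z)) (fun x => M i (dvr_pi D *: x)))
    & exists d : int, forall i, I i ->
          same (perp (M i)) (M (- i + (2 * n)%N%:Z * d))].

End Lattices.

(* Main.v *)
Require Import Defs.
From HB Require Import structures.
From mathcomp Require Import all_boot all_order all_algebra.
From mathcomp Require Import ring lra zify.
From Stdlib Require Import Classical.
Import Order.TTheory GRing.Theory Num.Theory.
Set Implicit Arguments.
Unset Strict Implicit.
Unset Printing Implicit Defensive.
Local Open Scope ring_scope.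

Section Val.
Variables (L : fieldType) (D : dvr L).
Local Notation O := (dvr_O D).
Local Notation pi := (dvr_pi D).

Lemma O0 : O 0. Proof. exact: dvr_O0. Qed.
Lemma O1 : O 1. Proof. exact: dvr_O1. Qed.
Lemma ON x : O x -> O (- x).
Proof. by move=> h; have := dvr_OB O0 h; rewrite sub0r. Qed.
Lemma OD x y : O x -> O y -> O (x + y).
Proof. by move=> hx hy; have := dvr_OB hx (ON hy); rewrite opprK. Qed.
Lemma OB x y : O x -> O y -> O (x - y). Proof. exact: dvr_OB. Qed.
Lemma OM x y : O x -> O y -> O (x * y). Proof. exact: dvr_OM. Qed.
Lemma Opi : O pi. Proof. exact: dvr_piO. Qed.
Lemma pi0 : pi != 0. Proof. exact: dvr_pi_neq0. Qed.
Lemma Oexpn (m : nat) : O (pi ^+ m).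
Proof. elim: m => [|m ih]; first by rewrite expr0; exact: O1. by rewrite exprS; apply: OM => //; exact: Opi. Qed.

Lemma neg_val u (z : int) : O u -> O u^-1 -> u != 0 -> O (u * pi ^ z) -> 0 <= z.
Proof.
move=> hu hui u0 h; case: z h => [m|m] h //.
suff : O pi^-1 by have := @dvr_pi_nonunit _ D.
have -> : pi^-1 = (u * pi ^ Negz m) * u^-1 * pi ^+ m.
  rewrite NegzE -exprnN exprS; set q := pi ^+ m.
  have q0 : q != 0 by rewrite expf_neq0 // pi0.
  have := pi0 => p0; field; rewrite q0 p0 u0 //.
by apply: OM; [apply: OM|apply: Oexpn].
Qed.

Lemma unitU x : O x -> ~ O (pi^-1 * x) -> O x^-1.
Proof.
move=> hx hn; have x0 : x != 0.
  by apply/eqP => e; apply: hn; rewrite e mulr0; exact: O0.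
have [u [z [hu hui ex]]] := dvr_fact D x0.
have u0 : u != 0 by apply/eqP => e; move: ex; rewrite e mul0r; apply/eqP.
have z0 : 0 <= z by apply: (neg_val hu hui u0); rewrite -ex.
case: z z0 ex => [[|m]|m] // _ ex.
  by move: ex; rewrite expr0z mulr1 => ->.
exfalso; apply: hn; rewrite ex exprSz.
have -> : pi^-1 * (u * (pi * pi ^ m)) = u * pi ^+ m.
  rewrite exprnP; have := pi0 => p0; field; done.
by apply: OM => //; apply: Oexpn.
Qed.

Lemma Oexpz (z : int) : 0 <= z -> O (pi ^ z).
Proof. by case: z => // m _; rewrite -exprnP; apply: Oexpn. Qed.

End Val.

Section Mod.
Variables (L : fieldType) (D : dvr L) (N : vectType L) (S : symplectic N).
Local Notation O := (dvr_O D).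
Local Notation pi := (dvr_pi D).
Local Notation sf := (sform S).
Implicit Types (A B C P Q : N -> Prop).

Lemma sfDl x y z : sf (x + y) z = sf x z + sf y z.
Proof. by have := sform_linl S 1 x y z; rewrite scale1r mul1r. Qed.
Lemma sf0l z : sf 0 z = 0.
Proof. by have := sfDl 0 0 z; rewrite addr0 => /eqP; rewrite -subr_eq subrr eq_sym => /eqP. Qed.
Lemma sfZl a x z : sf (a *: x) z = a * sf x z.
Proof. by have := sform_linl S a x 0 z; rewrite addr0 sf0l addr0. Qed.
Lemma sfDr x y z : sf z (x + y) = sf z x + sf z y.
Proof. by have := sform_linr S 1 x y z; rewrite scale1r mul1r. Qed.
Lemma sf0r z : sf z 0 = 0.
Proof. by have := sfDr 0 0 z; rewrite addr0 => /eqP; rewrite -subr_eq subrr eq_sym => /eqP. Qed.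
Lemma sfZr a x z : sf z (a *: x) = a * sf z x.
Proof. by have := sform_linr S a x 0 z; rewrite addr0 sf0r addr0. Qed.
Lemma sfC x y : sf x y = - sf y x.
Proof.
have := sform_alt S (x + y); rewrite sfDl !sfDr !sform_alt add0r addr0.
by move/eqP; rewrite addr_eq0 => /eqP.
Qed.
Lemma sfNl x z : sf (- x) z = - sf x z.
Proof. by rewrite -scaleN1r sfZl mulN1r. Qed.
Lemma sfBl x y z : sf (x - y) z = sf x z - sf y z.
Proof. by rewrite sfDl sfNl. Qed.
Lemma sfBr x y z : sf z (x - y) = sf z x - sf z y.
Proof. by rewrite sfDr -scaleN1r sfZr mulN1r. Qed.

Lemma same_refl A : same A A. Proof. by []. Qed.
Lemma same_sym A B : same A B -> same B A. Proof. by move=> h x; split => /h. Qed.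
Lemma same_trans A B C : same A B -> same B C -> same A C.
Proof. by move=> h1 h2 x; split => [/h1/h2|/h2/h1]. Qed.
Lemma sub_same A B : same A B -> lsubset A B. Proof. by move=> h x /h. Qed.
Lemma lsub_trans A B C : lsubset A B -> lsubset B C -> lsubset A C.
Proof. by move=> h1 h2 x /h1/h2. Qed.
Lemma same_sub A B : lsubset A B -> lsubset B A -> same A B.
Proof. by move=> h1 h2 x; split => [/h1|/h2]. Qed.

Lemma Osub0 P : Osubmod D P -> P 0. Proof. by case. Qed.
Lemma OsubD P x y : Osubmod D P -> P x -> P y -> P (x + y).
Proof. by case=> _ h _; apply: h. Qed.
Lemma OsubZ P a x : Osubmod D P -> O a -> P x -> P (a *: x).
Proof. by case=> _ _ h; apply: h. Qed.
Lemma OsubN P x : Osubmod D P -> P x -> P (- x).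
Proof. by move=> hP hx; rewrite -scaleN1r; apply: OsubZ => //; apply: ON; apply: O1. Qed.
Lemma OsubB P x y : Osubmod D P -> P x -> P y -> P (x - y).
Proof. by move=> hP hx hy; apply: OsubD => //; apply: OsubN. Qed.
Lemma Osub_same P Q : same P Q -> Osubmod D P -> Osubmod D Q.
Proof.
move=> h [h0 hD hZ]; split; first by apply/h.
- by move=> x y /h hx /h hy; apply/h; apply: hD.
- by move=> a x ha /h hx; apply/h; apply: hZ.
Qed.
Lemma Osub_sum P (I : Type) (r : seq I) (a : I -> L) (f : I -> N) :
  Osubmod D P -> (forall i, O (a i)) -> (forall i, P (f i)) ->
  P (\sum_(i <- r) a i *: f i).
Proof.
move=> hP ha hf; apply: (big_rec (fun v => P v)); first exact: Osub0.
by move=> i x _ hx; apply: OsubD => //; apply: OsubZ.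
Qed.

Definition perpS A := perp D S A.
Lemma Osub_perp A : Osubmod D (perp D S A).
Proof.
split.
- by move=> y _; rewrite sf0l; apply: O0.
- by move=> x y hx hy m hm; rewrite sfDl; apply: OD; [apply: hx|apply: hy].
- by move=> a x ha hx m hm; rewrite sfZl; apply: OM => //; apply: hx.
Qed.
Lemma perp_same A B : same A B -> same (perp D S A) (perp D S B).
Proof. by move=> h x; split => hx m /h hm; apply: hx. Qed.
Lemma perp_anti A B : lsubset A B -> lsubset (perp D S B) (perp D S A).
Proof. by move=> h x hx m /h; apply: hx. Qed.

Definition scale (z : int) A : N -> Prop := fun x => A (pi ^ z *: x).

Lemma pzV (z : int) : pi ^ z * pi ^ (- z) = 1.
Proof. by rewrite -expfzDr ?pi0 // subrr expr0z. Qed.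
Lemma pVz (z : int) : pi ^ (- z) * pi ^ z = 1.
Proof. by rewrite mulrC pzV. Qed.
Lemma pzZ (z w : int) (x : N) : pi ^ z *: (pi ^ w *: x) = pi ^ (z + w) *: x.
Proof. by rewrite scalerA expfzDr // pi0. Qed.

Lemma scale_same z A B : same A B -> same (scale z A) (scale z B).
Proof. by move=> h x; apply: h. Qed.
Lemma scale_sub z A B : lsubset A B -> lsubset (scale z A) (scale z B).
Proof. by move=> h x; apply: h. Qed.
Lemma scaleK z w A : same (scale z (scale w A)) (scale (w + z) A).
Proof. by move=> x; rewrite /scale pzZ. Qed.
Lemma scale0 A : same (scale 0 A) A.
Proof. by move=> x; rewrite /scale expr0z scale1r. Qed.
Lemma scaleKV z A : same (scale z (scale (- z) A)) A.
Proof. by apply: same_trans (scaleK _ _ _) _; rewrite addNr; apply: scale0. Qed.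
Lemma scaleVK z A : same (scale (- z) (scale z A)) A.
Proof. by apply: same_trans (scaleK _ _ _) _; rewrite addrN; apply: scale0. Qed.
Lemma Osub_scale z A : Osubmod D A -> Osubmod D (scale z A).
Proof.
case=> h0 hD hZ; split; rewrite /scale.
- by rewrite scaler0.
- by move=> x y hx hy; rewrite scalerDr; apply: hD.
- by move=> a x ha hx; rewrite scalerA mulrC -scalerA; apply: hZ.
Qed.
Lemma perp_scale z A : same (perp D S (scale z A)) (scale (- z) (perp D S A)).
Proof.
move=> y; split => hy m hm.
- have hm' : scale z A (pi ^ (- z) *: m) by rewrite /scale pzZ subrr expr0z scale1r.
  by have := hy _ hm'; rewrite sfZr sfZl.
- have := hy _ hm; rewrite sfZl sfZr mulrA pVz mul1r //.
Qed.

Lemma OspanE (s : seq N) (x : N) : Ospan D s x <->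
  exists a : nat -> L, (forall i, O (a i)) /\ x = \sum_(i < size s) a i *: s`_i.
Proof.
split.
- case=> a [ha ->]; exists (fun j => oapp a 0 (insub j)); split.
    by move=> j; case: (insub j) => [i|] /=; [apply: ha|apply: O0].
  by apply: eq_bigr => i _; rewrite valK.
- case=> a [ha ->]; exists (fun i => a i); split => //.
Qed.

Lemma Osub_Ospan (s : seq N) : Osubmod D (Ospan D s).
Proof.
split.
- apply/OspanE; exists (fun _ => 0); split; first by move=> _; apply: O0.
  by rewrite big1 // => i _; rewrite scale0r.
- move=> x y /OspanE [a [ha ->]] /OspanE [b [hb ->]]; apply/OspanE.
  exists (fun i => a i + b i); split; first by move=> i; apply: OD.
  by rewrite -big_split; apply: eq_bigr => i _; rewrite scalerDl.
- move=> c x hc /OspanE [a [ha ->]]; apply/OspanE.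
  exists (fun i => c * a i); split; first by move=> i; apply: OM.
  by rewrite scaler_sumr; apply: eq_bigr => i _; rewrite scalerA.
Qed.

Lemma Osub_lat A : is_lattice D A -> Osubmod D A.
Proof. by case=> s [h _]; apply: Osub_same (same_sym h) (Osub_Ospan s). Qed.

Lemma lat_same A B : same A B -> is_lattice D A -> is_lattice D B.
Proof. by move=> h [s [h1 h2]]; exists s; split => //; apply: same_trans (same_sym h) h1. Qed.

Lemma span_full_sub (s t : seq N) : <<s>>%VS = fullv ->
  (forall v, v \in s -> v \in <<t>>%VS) -> <<t>>%VS = fullv.
Proof.
move=> hs h; apply/eqP; rewrite eqEsubv subvf /= -hs.
by apply/span_subvP.
Qed.

Lemma lat_scale z A : is_lattice D A -> is_lattice D (scale z A).
Proof.
case=> s [h1 h2]; exists (map (fun v => pi ^ (- z) *: v) s); split.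
- move=> x; rewrite /scale; split.
  + move/h1/OspanE => [a [ha e]]; apply/OspanE; exists a; split => //.
    rewrite size_map; have -> : x = pi ^ (- z) *: (pi ^ z *: x) by rewrite pzZ addNr expr0z scale1r.
    rewrite e scaler_sumr; apply: eq_bigr => i _.
    by rewrite (nth_map 0) // scalerA mulrC -scalerA.
  + move/OspanE => [a [ha e]]; apply/h1/OspanE; exists a; split => //.
    rewrite e scaler_sumr size_map; apply: eq_bigr => i _.
    by rewrite (nth_map 0) // scalerA mulrC -scalerA pzZ subrr expr0z scale1r.
- apply: span_full_sub h2 _ => v hv.
  have -> : v = pi ^ z *: (pi ^ (- z) *: v) by rewrite pzZ subrr expr0z scale1r.
  by apply: memvZ; apply: memv_span; apply: map_f.
Qed.

End Mod.

Lemma ex_minP (p : nat -> Prop) : (exists n, p n) ->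
  exists n, p n /\ forall m, (m < n)%N -> ~ p m.
Proof.
case=> n0 h0.
suff H : forall B n, (n <= B)%N -> p n -> exists n, p n /\ forall m, (m < n)%N -> ~ p m.
  exact: (H n0 n0).
elim=> [|B ih] n hn hp.
  by exists n; split => // m; move: hn; rewrite leqn0 => /eqP ->.
case: (classic (exists m, (m < n)%N /\ p m)) => [[m [hm pm]]|hno].
  by apply: (ih m) => //; rewrite -ltnS (leq_trans hm hn).
exists n; split => // m hm pm; apply: hno; by exists m.
Qed.

Lemma not_sub_ex (T : Type) (A B : T -> Prop) : ~ (forall x, A x -> B x) -> exists x, A x /\ ~ B x.
Proof.
move=> h; apply: NNPP => hn; apply: h => x hx; apply: NNPP => hb; apply: hn; by exists x.
Qed.

Section Len.
Variables (L : fieldType) (D : dvr L) (N : vectType L).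
Local Notation O := (dvr_O D).
Local Notation pi := (dvr_pi D).
Implicit Types (A B C Q R : N -> Prop).

Definition step A B := [/\ lsubset A B, ~ lsubset B A &
  forall Q, Osubmod D Q -> lsubset A Q -> lsubset Q B -> same Q A \/ same Q B].

Definition series (P : nat -> N -> Prop) A B m :=
  [/\ same (P 0%N) A, same (P m) B, (forall j, (j <= m)%N -> Osubmod D (P j)) &
        (forall j, (j < m)%N -> step (P j) (P j.+1))].

Lemma hlE A B m : has_length D A B m <-> exists P, series P A B m.
Proof. by []. Qed.

Lemma step_same A A' B B' : same A A' -> same B B' -> step A B -> step A' B'.
Proof.
move=> hA hB [h1 h2 h3]; split.
- by move=> x /hA /h1 /hB.
- by move=> h; apply: h2 => x /hB /h /hA.
- move=> Q hQ hAQ hQB.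
  have [e|e] := h3 Q hQ (fun x hx => hAQ x (proj1 (hA x) hx)) (fun x hx => proj2 (hB x) (hQB x hx)).
  + by left; apply: same_trans e hA.
  + by right; apply: same_trans e hB.
Qed.

Lemma hl_same A A' B B' m : same A A' -> same B B' -> has_length D A B m -> has_length D A' B' m.
Proof.
move=> hA hB [P [h0 hm h2 h3]]; exists P; split => //.
- exact: same_trans h0 hA.
- exact: same_trans hm hB.
Qed.

Lemma series_mono P A B m : series P A B m -> forall i j, (i <= j)%N -> (j <= m)%N -> lsubset (P i) (P j).
Proof.
move=> [_ _ _ hs] i j hij hjm; elim: j hij hjm => [|j ih] hij hjm.
  by move: hij; rewrite leqn0 => /eqP ->.
case: (ltngtP i j.+1) hij => // [hlt|->] _; last by [].
apply: lsub_trans (ih hlt (ltnW hjm)) _; by case: (hs j hjm).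
Qed.

Lemma hl_sub A B m : has_length D A B m -> lsubset A B.
Proof.
case=> P hP; have [h0 hm _ _] := hP.
move=> x /h0 hx; apply/hm; exact: (series_mono hP (leq0n m) (leqnn m)).
Qed.

Lemma hl_Osub A B m : has_length D A B m -> Osubmod D A /\ Osubmod D B.
Proof.
case=> P [h0 hm ho _]; split.
- by apply: Osub_same h0 (ho 0%N (leq0n m)).
- by apply: Osub_same hm (ho m (leqnn m)).
Qed.

Lemma hl_strict A B m : has_length D A B m -> (0 < m)%N -> ~ lsubset B A.
Proof.
case=> P hP hm0 hBA; have [h0 hm _ hs] := hP.
have [_ h _] := hs 0%N hm0; apply: h => x hx.
apply/h0; apply: hBA; apply/hm; exact: (series_mono hP hm0 (leqnn m)).
Qed.

Lemma hl1 A B : Osubmod D A -> Osubmod D B -> step A B -> has_length D A B 1.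
Proof.
move=> hA hB hs; exists (fun j => if j is 0%N then A else B); split => //.
- by case.
- by case.
Qed.

Lemma hl1E A B : has_length D A B 1 -> step A B.
Proof.
case=> P [h0 h1 _ hs]; exact: step_same h0 h1 (hs 0%N isT).
Qed.

Lemma hl_cat A B C r s : has_length D A B r -> has_length D B C s -> has_length D A C (r + s).
Proof.
case=> P1 [a0 a1 a2 a3] [P2 [b0 b1 b2 b3]].
exists (fun j => if (j <= r)%N then P1 j else P2 (j - r)%N); split.
- by rewrite leq0n.
- case: ifP => h.
  + have s0 : s = 0%N by lia.
    move: h; rewrite s0 addn0 => _; apply: same_trans a1 _.
    by apply: same_trans (same_sym b0) _; rewrite -s0.
  + by rewrite addKn.
- move=> j hj; case: ifP => h; first by apply: a2.
  by apply: b2; lia.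
- move=> j hj; case: (ltngtP j r) => hjr; rewrite /=.
  + by apply: a3.
  + rewrite (_ : (j.+1 - r = (j - r).+1)%N); last by lia.
    by apply: b3; lia.
  + subst j; rewrite (_ : (r.+1 - r = 1)%N); last by lia.
    apply: step_same (b3 0%N _); [|by []|lia].
    by apply: same_trans b0 (same_sym a1).
Qed.

Lemma step_scale z A B : step A B -> step (scale D z A) (scale D z B).
Proof.
case=> h1 h2 h3; split.
- exact: scale_sub.
- move=> h; apply: h2 => x hx.
  have := h (pi ^ (- z) *: x); rewrite /scale pzZ subrr expr0z scale1r; by apply.
- move=> Q hQ hAQ hQB.
  have hQ' : Osubmod D (scale D (- z) Q) by apply: Osub_scale.
  have e1 : lsubset A (scale D (- z) Q).
    move=> x hx; rewrite /scale; apply: hAQ.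
    by rewrite /scale pzZ subrr expr0z scale1r.
  have e2 : lsubset (scale D (- z) Q) B.
    move=> x hx; have := hQB _ hx; by rewrite /scale pzZ subrr expr0z scale1r.
  case: (h3 _ hQ' e1 e2) => e; [left|right].
  + apply: same_trans (same_sym (scaleKV D z Q)) _; exact: scale_same.
  + apply: same_trans (same_sym (scaleKV D z Q)) _; exact: scale_same.
Qed.

Lemma hl_scale z A B m : has_length D A B m -> has_length D (scale D z A) (scale D z B) m.
Proof.
case=> P [h0 h1 h2 h3]; exists (fun j => scale D z (P j)); split.
- exact: scale_same.
- exact: scale_same.
- by move=> j hj; apply: Osub_scale; apply: h2.
- by move=> j hj; apply: step_scale; apply: h3.
Qed.

Definition sumS A B : N -> Prop := fun x => exists a b, [/\ A a, B b & x = a + b].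
Definition capS A B : N -> Prop := fun x => A x /\ B x.

Lemma Osub_sumS A B : Osubmod D A -> Osubmod D B -> Osubmod D (sumS A B).
Proof.
move=> hA hB; split.
- exists 0, 0; split; [exact: (Osub0 hA)|exact: (Osub0 hB)|by rewrite addr0].
- move=> x y [a [b [ha hb ->]]] [a' [b' [ha' hb' ->]]].
  exists (a + a'), (b + b'); split; [exact: (OsubD hA)|exact: (OsubD hB)|].
  by rewrite addrACA.
- move=> c x hc [a [b [ha hb ->]]]; exists (c *: a), (c *: b); split.
  + exact: (OsubZ hA).
  + exact: (OsubZ hB).
  + by rewrite scalerDr.
Qed.

Lemma Osub_capS A B : Osubmod D A -> Osubmod D B -> Osubmod D (capS A B).
Proof.
move=> hA hB; split.
- by split; [apply: (Osub0 hA)|apply: (Osub0 hB)].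
- by move=> x y [] ? ? [] ? ?; split; [apply: (OsubD hA)|apply: (OsubD hB)].
- by move=> c x hc [] ? ?; split; [apply: (OsubZ hA)|apply: (OsubZ hB)].
Qed.

Lemma sumS_l A B : Osubmod D B -> lsubset A (sumS A B).
Proof. by move=> hB x hx; exists x, 0; rewrite addr0; split => //; apply: (Osub0 hB). Qed.
Lemma sumS_r A B : Osubmod D A -> lsubset B (sumS A B).
Proof. by move=> hA x hx; exists 0, x; rewrite add0r; split => //; apply: (Osub0 hA). Qed.
Lemma sumS_sub A B C : Osubmod D C -> lsubset A C -> lsubset B C -> lsubset (sumS A B) C.
Proof. by move=> hC h1 h2 x [a [b [ha hb ->]]]; apply: (OsubD hC); [apply: h1|apply: h2]. Qed.

End Len.

Section Split.
Variables (L : fieldType) (D : dvr L) (N : vectType L).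
Implicit Types (A B C X : N -> Prop).

Lemma hl_split_lo A B C r : has_length D A C r -> Osubmod D B -> step D A B ->
  lsubset B C -> has_length D B C r.-1.
Proof.
case=> Q hQ; have [q0 qr qo qs] := hQ.
move=> hB [hAB hnBA hmax] hBC.
have mono := series_mono hQ.
have [j [[hjr hBj] hjmin]] := ex_minP (p := fun j => (j <= r)%N /\ lsubset B (Q j))
  (ex_intro _ r (conj (leqnn r) (fun x hx => proj2 (qr x) (hBC x hx)))).
have j0 : (0 < j)%N.
  case: j hjr hBj hjmin => // _ hB0 _; exfalso; apply: hnBA => x /hB0 /q0; done.
pose R := fun i => sumS (Q i) B.
have hnot : forall i, (i < j)%N -> ~ lsubset B (Q i).
  by move=> i hi hb; apply: (hjmin i hi); split => //; lia.
have RO : forall i, (i <= r)%N -> Osubmod D (R i).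
  by move=> i hi; apply: Osub_sumS => //; apply: qo.
have f2 : forall i, (i <= r)%N -> lsubset B (Q i) -> same (R i) (Q i).
  move=> i hi hBi; apply: same_sub; last by exact: (sumS_l hB).
  by apply: (sumS_sub (qo _ hi)) => // x hx; apply: hBi.
have AQ : forall i, (i <= r)%N -> lsubset A (Q i).
  by move=> i hi x /q0 hx; apply: (mono 0%N i) => //.
have f3 : forall i, (i < j)%N -> same (capS (Q i) B) A.
  move=> i hi; have hir : (i <= r)%N by lia.
  have := hmax (capS (Q i) B) (Osub_capS (qo _ hir) hB).
  case.
  - by move=> x hx; split; [apply: AQ|apply: hAB].
  - by move=> x [].
  - by [].
  - move=> e; exfalso; apply: (hnot i hi) => x hx; by case: (proj2 (e x) hx).
have f5 : forall i, (i.+1 < j)%N -> step D (R i) (R i.+1).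
  move=> i hi; have hir : (i.+1 <= r)%N by lia.
  have [s1 s2 s3] := qs i hir.
  split.
  - apply: (sumS_sub (RO _ hir)).
      by move=> x hx; apply: (sumS_l hB); apply: s1.
    exact: (sumS_r (qo _ hir)).
  - move=> hsub; apply: s2 => x hx.
    have [q [b [hq hb ex]]] := hsub x (sumS_l hB hx).
    have hbq : Q i.+1 b.
      have -> : b = x - q by rewrite ex addrC addKr.
      by apply: OsubB (qo _ hir) hx _; apply: s1.
    have hbA : A b by apply/(f3 _ hi).
    rewrite ex; apply: OsubD (qo _ (ltnW hir)) hq _.
    by apply: (AQ i (ltnW hir)).
  - move=> X hX hRX hXR.
    have hcapO : Osubmod D (capS X (Q i.+1)) by apply: Osub_capS => //; apply: qo.
    have BX : lsubset B X by move=> x hx; apply: hRX; apply: (sumS_r (qo i ltac:(lia))).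
    case: (s3 _ hcapO).
    + by move=> x hx; split; [apply: hRX; apply: (sumS_l hB)|apply: s1].
    + by move=> x [].
    + move=> e; left; apply: same_sub => //.
      move=> x hx; have [q [b [hq hb ex]]] := hXR x hx.
      have hqX : X q.
        have -> : q = x - b by rewrite ex addrK.
        by apply: OsubB hX hx (BX _ hb).
      by exists q, b; split => //; apply/e.
    + move=> e; right; apply: same_sub => //.
      apply: (sumS_sub hX) => x hx; first by case: (proj2 (e x) hx).
      exact: BX.
have f4 : same (R j.-1) (Q j).
  have hj1 : (j.-1 < r)%N by lia.
  have [s1 s2 s3] := qs j.-1 hj1.
  rewrite prednK // in s1 s3.
  case: (s3 (R j.-1) (RO _ (ltnW hj1))).
  - exact: (sumS_l hB).
  - apply: (sumS_sub (qo _ hjr)); [exact: s1|exact: hBj].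
  - move=> e; exfalso; apply: (hnot j.-1); first by lia.
    by move=> x hx; apply/e; apply: (sumS_r (qo j.-1 ltac:(lia))).
  - by [].
exists (fun i => if (i < j)%N then R i else R i.+1); split.
- rewrite j0; apply: same_sub; last by apply: (sumS_r (qo 0%N (leq0n r))).
  apply: (sumS_sub hB) => // x /q0; exact: hAB.
- case: ifP => h.
  + have ejr : j = r by lia.
    rewrite (_ : r.-1 = j.-1); last by lia.
    by apply: same_trans f4 _; rewrite ejr.
  + rewrite (_ : r.-1.+1 = r); last by lia.
    by apply: same_trans (f2 _ (leqnn r) _) qr => x /hBj; apply: mono.
- by move=> i hi; case: ifP => _; apply: RO; lia.
- move=> i hi; case: (ltngtP i.+1 j) => h.
  + exact: f5.
  + have := qs i.+1 ltac:(lia) => st.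
    apply: step_same st.
    * apply: same_sym; apply: f2; first lia.
      by move=> x /hBj; apply: mono; lia.
    * apply: same_sym; apply: f2; first lia.
      by move=> x /hBj; apply: mono; lia.
  + subst j.
    have := qs i.+1 ltac:(lia) => st.
    apply: step_same st.
    * by apply: same_sym; exact: f4.
    * by apply: same_sym; apply: f2; [lia|move=> x /hBj; apply: mono; lia].
Qed.

Lemma hl_split_hi A B C r : has_length D A C r -> Osubmod D B -> step D B C ->
  lsubset A B -> has_length D A B r.-1.
Proof.
case=> Q hQ; have [q0 qr qo qs] := hQ.
move=> hB [hBC hnCB hmax] hAB.
have mono := series_mono hQ.
have [j [[hjr hQj] hjmin]] := ex_minP (p := fun j => (j <= r)%N /\ ~ lsubset (Q j) B)
  (ex_intro _ r (conj (leqnn r) (fun h => hnCB (fun x hx => h x (proj2 (qr x) hx))))).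
have j0 : (0 < j)%N.
  case: j hjr hQj hjmin => // _ hQ0 _; exfalso; apply: hQ0 => x /q0; exact: hAB.
pose U := fun i => capS (Q i) B.
have hin : forall i, (i < j)%N -> lsubset (Q i) B.
  by move=> i hi; apply: NNPP => hn; apply: (hjmin i hi); split => //; lia.
have UO : forall i, (i <= r)%N -> Osubmod D (U i).
  by move=> i hi; apply: Osub_capS => //; apply: qo.
have g2 : forall i, (i < j)%N -> same (U i) (Q i).
  move=> i hi; apply: same_sub; first by move=> x [].
  by move=> x hx; split => //; exact: (hin i hi x hx).
have gS : forall i, (j <= i)%N -> (i <= r)%N -> same (sumS (Q i) B) C.
  move=> i hji hir.
  have hsO : Osubmod D (sumS (Q i) B) by apply: Osub_sumS => //; apply: qo.
  have hC : Osubmod D C by apply: Osub_same qr (qo r (leqnn r)).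
  case: (hmax _ hsO).
  - exact: (sumS_r (qo _ hir)).
  - apply: (sumS_sub hC); last exact: hBC.
    by move=> x hx; apply/qr; exact: (mono i r hir (leqnn r) x hx).
  - move=> e; exfalso; apply: hQj => x hx; apply/e; apply: (sumS_l hB).
    exact: (mono j i).
  - by [].
have g4 : same (U j) (Q j.-1).
  have hj1 : (j.-1 < r)%N by lia.
  have [s1 s2 s3] := qs j.-1 hj1.
  rewrite prednK // in s1 s3.
  case: (s3 (U j) (UO _ hjr)).
  - by move=> x hx; split; [apply: s1|apply: (hin j.-1) => //; lia].
  - by move=> x [].
  - by [].
  - move=> e; exfalso; apply: hQj => x hx; by case: (proj2 (e x) hx).
have g5 : forall i, (j <= i)%N -> (i < r)%N -> step D (U i) (U i.+1).
  move=> i hji hir.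
  have [s1 s2 s3] := qs i hir.
  split.
  - by move=> x [h1 h2]; split => //; apply: s1.
  - move=> hsub; apply: s2 => x hx.
    have hxC : C x by apply/qr; apply: (mono i.+1 r) => //.
    have [q [b [hq hb ex]]] := proj2 (gS i hji (ltnW hir) x) hxC.
    have hbq : Q i.+1 b.
      have -> : b = x - q by rewrite ex addrC addKr.
      by apply: (OsubB (qo _ hir)) => //; apply: s1.
    have := hsub b (conj hbq hb) => -[hbi _].
    by rewrite ex; apply: (OsubD (qo _ (ltnW hir))).
  - move=> X hX hUX hXU.
    have XB : lsubset X B by move=> x /hXU [].
    have hYO : Osubmod D (sumS X (Q i)) by apply: Osub_sumS => //; apply: qo; lia.
    case: (s3 _ hYO).
    + exact: (sumS_r hX).
    + apply: (sumS_sub (qo _ hir)) => // x /hXU []; done.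
    + move=> e; left; apply: same_sub => // x hx; split; last by apply: XB.
      by apply/e; apply: (sumS_l (qo _ (ltnW hir))).
    + move=> e; right; apply: same_sub => // x [hx1 hx2].
      have [a [q [ha hq ex]]] := proj2 (e x) hx1.
      have hqX : X q.
        apply: hUX; split => //.
        have -> : q = x - a by rewrite ex addrC addKr.
        by apply: (OsubB hB) => //; apply: XB.
      by rewrite ex; apply: (OsubD hX).
exists (fun i => if (i < j)%N then U i else U i.+1); split.
- by rewrite j0; apply: same_trans (g2 _ j0) q0.
- have hUr : same (U r) B.
    apply: same_sub; first by move=> x [].
    by move=> x hx; split => //; apply/qr; apply: hBC.
  case: ifP => h.
  + have ejr : j = r by lia.
    apply: same_trans (g2 _ h) _.
    rewrite ejr in g4; exact: same_trans (same_sym g4) hUr.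
  + by rewrite (_ : r.-1.+1 = r); last by lia.
- by move=> i hi; case: ifP => _; apply: UO; lia.
- move=> i hi; case: (ltngtP i.+1 j) => h.
  + have := qs i ltac:(lia) => st.
    by apply: step_same st; apply: same_sym; apply: g2; lia.
  + by apply: g5; lia.
  + subst j; apply: step_same (g5 i.+1 (leqnn _) ltac:(lia)).
    * by apply: same_trans g4 (same_sym (g2 i (ltnSn i))).
    * by [].
Qed.

End Split.

Section Cons.
Variables (L : fieldType) (D : dvr L) (N : vectType L).
Local Notation O := (dvr_O D).
Local Notation pi := (dvr_pi D).
Implicit Types (A B C X : N -> Prop).

Lemma chain_of_cons (I : int -> Prop) (F : int -> N -> Prop) :
  (forall i i', I i -> I i' -> i < i' -> (forall j, I j -> i < j -> j < i' -> False) ->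
     lsubset (F i) (F i') /\ has_length D (F i) (F i') `|i' - i|%N) ->
  forall i i', I i -> I i' -> i < i' ->
     lsubset (F i) (F i') /\ has_length D (F i) (F i') `|i' - i|%N.
Proof.
move=> hc.
suff H : forall m i i', (`|i' - i| <= m)%N -> I i -> I i' -> i < i' ->
     lsubset (F i) (F i') /\ has_length D (F i) (F i') `|i' - i|%N.
  by move=> i i'; apply: (H _ i i' (leqnn _)).
elim=> [|m ih] i i' hm hi hi' hii'.
  exfalso; move: hm; rewrite leqn0 => /eqP; lia.
case: (classic (exists j, [/\ I j, i < j & j < i'])) => [[j [hj h1 h2]]|hno].
  have [s1 l1] := ih i j ltac:(lia) hi hj h1.
  have [s2 l2] := ih j i' ltac:(lia) hj hi' h2.
  split; first exact: lsub_trans s1 s2.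
  have := hl_cat l1 l2; congr has_length; lia.
apply: hc => // j hj h1 h2; apply: hno; by exists j.
Qed.

Lemma mem_Ospan (s : seq N) i : (i < size s)%N -> Ospan D s s`_i.
Proof.
move=> hi; apply/OspanE; exists (fun j => if j == i then 1 else 0); split.
  by move=> j; case: ifP => _; [apply: O1|apply: O0].
rewrite (bigD1 (Ordinal hi)) //= eqxx scale1r big1 ?addr0 // => j hj.
rewrite ifN ?scale0r //; apply: contra hj => /eqP e; apply/eqP; apply: val_inj; done.

Qed.

Definition Qx A (v : N) : N -> Prop := fun y => exists a m, [/\ O a, A m & y = m + a *: v].

Lemma Osub_Qx A v : Osubmod D A -> Osubmod D (Qx A v).
Proof.
move=> hA; split.
- exists 0, 0; split; [exact: O0|exact: (Osub0 hA)|by rewrite scale0r addr0].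
- move=> x y [a [m [ha hm ->]]] [b [m' [hb hm' ->]]].
  exists (a + b), (m + m'); split; [exact: OD|exact: (OsubD hA)|].
  by rewrite scalerDl addrACA.
- move=> c x hc [a [m [ha hm ->]]]; exists (c * a), (c *: m); split.
  + exact: OM.
  + exact: (OsubZ hA).
  + by rewrite scalerDr scalerA.
Qed.

Lemma unit_aux a : O a -> ~ O (pi^-1 * a) -> O a^-1 /\ a != 0.
Proof.
move=> ha hn; split; first exact: unitU.
by apply/eqP => e; apply: hn; rewrite e mulr0; apply: O0.
Qed.

Lemma step_dim1 A B : Osubmod D A -> Osubmod D B -> step D A B -> dim1 D A B.
Proof.
move=> hA hB [hAB hnBA hmax].
have [x0 [hx0B hx0A]] := not_sub_ex hnBA.
have gen : forall v, B v -> ~ A v -> same (Qx A v) B.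
  move=> v hv hnv; case: (hmax _ (Osub_Qx v hA)).
  - by move=> x hx; exists 0, x; split; [exact: O0|by []|by rewrite scale0r addr0].
  - by move=> x [a [m [ha hm ->]]]; apply: (OsubD hB); [apply: hAB|apply: (OsubZ hB)].
  - move=> e; exfalso; apply: hnv; apply/e; exists 1, 0.
    by split; [exact: O1|exact: (Osub0 hA)|rewrite scale1r add0r].
  - by [].
split.
- move=> x [y [hy ->]]; apply: NNPP => hn.
  have hpy : B (pi *: y) by apply: (OsubZ hB) => //; apply: Opi.
  have [a [m [ha hm e1]]] := proj2 (gen _ hpy hn x0) hx0B.
  have [b [m' [hb hm' e2]]] := proj2 (gen _ hx0B hx0A y) hy.
  pose u := 1 - a * pi * b.
  have hu : O u by apply: OB; [apply: O1|apply: OM => //; apply: OM => //; apply: Opi].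
  have hnu : ~ O (pi^-1 * u).
    move=> h; apply: (@dvr_pi_nonunit _ D).
    have -> : pi^-1 = pi^-1 * u + a * b.
      rewrite /u; have := pi0 D => p0; field; done.
    by apply: OD => //; apply: OM.
  have [hui u0] := unit_aux hu hnu.
  have e3 : x0 = m + (a * pi) *: m' + (a * pi * b) *: x0.
    by rewrite {1}e1 e2 !scalerDr !scalerA addrA ?mulrA.
  have eu : u *: x0 = m + (a * pi) *: m'.
    by rewrite /u scalerBl scale1r {1}e3 addrK.
  apply: hx0A.
  have -> : x0 = u^-1 *: (u *: x0) by rewrite scalerA mulVf // scale1r.
  rewrite eu; apply: (OsubZ hA) => //; apply: (OsubD hA) => //.
  by apply: (OsubZ hA) => //; apply: OM => //; apply: Opi.
- exists x0; split => // y hy.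
  have [a [m [ha hm e]]] := proj2 (gen _ hx0B hx0A y) hy.
  by exists a; split => //; rewrite e addrK.
Qed.

Lemma dim1_step A B : Osubmod D A -> Osubmod D B -> lsubset A B -> dim1 D A B -> step D A B.
Proof.
move=> hA hB hAB [hpi [x0 [hx0 hnx0 hgen]]]; split => //.
  by move=> h; apply: hnx0; apply: h.
move=> Q hQ hAQ hQB.
case: (classic (lsubset Q A)) => [h|h].
  by left; apply: same_sub.
right; have [q [hq hqA]] := not_sub_ex h.
have [a [ha hqa]] := hgen q (hQB q hq).
have hax : Q (a *: x0).
  have -> : a *: x0 = q - (q - a *: x0) by rewrite opprB addrC subrK.
  by apply: (OsubB hQ) => //; apply: hAQ.
have hx0Q : Q x0.
  case: (classic (O (pi^-1 * a))) => hpa.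
    exfalso; apply: hqA.
    have -> : q = (q - a *: x0) + pi *: ((pi^-1 * a) *: x0).
      by rewrite scalerA mulrA mulfV ?pi0 // mul1r subrK.
    apply: (OsubD hA) => //; apply: hpi; exists ((pi^-1 * a) *: x0); split => //.
    exact: (OsubZ hB).
  have [hai a0] := unit_aux ha hpa.
  have -> : x0 = a^-1 *: (a *: x0) by rewrite scalerA mulVf // scale1r.
  exact: (OsubZ hQ).
apply: same_sub => // y hy.
have [b [hb hyb]] := hgen y hy.
have -> : y = (y - b *: x0) + b *: x0 by rewrite subrK.
apply: (OsubD hQ); [exact: hAQ|exact: (OsubZ hQ)].
Qed.

End Cons.

Section Dual.
Variables (L : fieldType) (D : dvr L) (N : vectType L) (S : symplectic N).
Local Notation O := (dvr_O D).
Local Notation pi := (dvr_pi D).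
Local Notation sf := (sform S).
Variables (Mk P Ad : N -> Prop) (x0 : N).
Hypotheses (hMk : Osubmod D Mk) (hP : Osubmod D P) (hMkP : lsubset Mk P)
  (hAd : same (perp D S Mk) Ad) (hAdd : same (perp D S Ad) Mk)
  (hAdl : is_lattice D Ad)
  (hx0P : P x0) (hx0n : ~ Mk x0)
  (hgen : forall y, P y -> exists a, O a /\ Mk (y - a *: x0))
  (hpi : forall y, P y -> Mk (pi *: y)).

Local Notation Pd := (perp D S P).

Lemma hAdO : Osubmod D Ad. Proof. exact: Osub_lat. Qed.

Lemma Pd_sub_Ad : lsubset Pd Ad.
Proof. by move=> y hy; apply/hAd; apply: (perp_anti hMkP). Qed.

Lemma Pd_char y : Ad y -> (Pd y <-> O (sf y x0)).
Proof.
move=> hy; split; first by move=> h; apply: h.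
move=> h p hp; have [a [ha hm]] := hgen hp.
have -> : p = (p - a *: x0) + a *: x0 by rewrite subrK.
rewrite sfDr sfZr; apply: OD; last by apply: OM.
by apply: (proj2 (hAd y)) hy _ hm.
Qed.

Lemma ppi y : Ad y -> O (pi * sf y x0).
Proof. by move=> hy; rewrite -sfZr; apply: (proj2 (hAd y)) hy _ (hpi hx0P). Qed.

Lemma red r y : Ad r -> ~ O (sf r x0) -> Ad y ->
  O (sf y x0 / sf r x0) /\ Pd (y - (sf y x0 / sf r x0) *: r).
Proof.
move=> hr hnr hy.
have hpb : O (pi * sf r x0) by apply: ppi.
have hnb : ~ O (pi^-1 * (pi * sf r x0)) by rewrite mulrA mulVf ?pi0 // mul1r.
have [hi b0] := unit_aux hpb hnb.
have bn0 : sf r x0 != 0 by apply: contraNneq b0 => ->; rewrite mulr0.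
have hc : O (sf y x0 / sf r x0).
  have -> : sf y x0 / sf r x0 = (pi * sf y x0) * (pi * sf r x0)^-1.
    have := pi0 D => p0; field; rewrite bn0 p0 //.
  by apply: OM => //; apply: ppi.
split => //; apply/Pd_char.
  by apply: (OsubB hAdO) => //; apply: (OsubZ hAdO).
by rewrite sfBl sfZl mulfVK // subrr; apply: O0.
Qed.

Lemma y0_ex : exists y0, Ad y0 /\ ~ O (sf y0 x0).
Proof.
apply: NNPP => hn; apply: hx0n; apply/hAdd => y hy.
rewrite sfC; apply: ON; apply: NNPP => h; apply: hn; by exists y.
Qed.

Lemma step_Pd : step D Pd Ad.
Proof.
have [y0 [hy0 hny0]] := y0_ex.
split; first exact: Pd_sub_Ad.
  by move=> h; apply: hny0; apply: (h y0 hy0).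
move=> X hX hPX hXA.
case: (classic (lsubset X Pd)) => [h|h]; first by left; apply: same_sub.
right; have [r [hr hrP]] := not_sub_ex h.
have hrA := hXA r hr.
have hnr : ~ O (sf r x0) by move=> hh; apply: hrP; apply/Pd_char.
apply: same_sub => // y hy.
have [hc hd] := red hrA hnr hy.
have -> : y = (y - (sf y x0 / sf r x0) *: r) + (sf y x0 / sf r x0) *: r by rewrite subrK.
by apply: (OsubD hX); [apply: hPX|apply: (OsubZ hX)].
Qed.

Lemma Pd_dd : same (perp D S Pd) P.
Proof.
have [y0 [hy0 hny0]] := y0_ex.
set be := sf y0 x0.
have hpb : O (pi * be) by apply: ppi.
have hnb : ~ O (pi^-1 * (pi * be)) by rewrite mulrA mulVf ?pi0 // mul1r.
have [hi b0] := unit_aux hpb hnb.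
have bn0 : be != 0 by apply: contraNneq b0 => ->; rewrite mulr0.
have hpy0 : Pd (pi *: y0).
  apply/Pd_char; first by apply: (OsubZ hAdO) => //; apply: Opi.
  by rewrite sfZl.
apply: same_sub; last first.
  by move=> p hp y hy; rewrite sfC; apply: ON; apply: hy.
move=> w hw.
set ga := sf y0 w.
have hpg : O (pi * ga).
  by rewrite /ga sfC mulrN -sfZr; apply: ON; apply: hw.
set b := ga / be.
have hb : O b.
  have -> : b = (pi * ga) * (pi * be)^-1.
    rewrite /b; have := pi0 D => p0; field; rewrite bn0 p0 //.
  by apply: OM.
have hw' : Mk (w - b *: x0).
  apply/hAdd => y hy.
  have [hc hd] := red hy0 hny0 hy.
  set c := sf y x0 / be in hc hd.
  have -> : y = (y - c *: y0) + c *: y0 by rewrite subrK.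
  rewrite sfDr sfZr.
  have -> : sf (w - b *: x0) y0 = 0.
    rewrite sfBl sfZl (sfC S w) (sfC S x0) -/ga -/be /b mulrN mulfVK //.
    by rewrite opprK addNr.
  rewrite mulr0 addr0 sfBl sfZl.
  have -> : sf x0 (y - c *: y0) = 0.
    rewrite sfC sfBl sfZl /c -/be mulfVK // subrr oppr0 //.
  by rewrite mulr0 subr0; apply: hw.
have -> : w = (w - b *: x0) + b *: x0 by rewrite subrK.
by apply: (OsubD hP); [apply: hMkP|apply: (OsubZ hP)].
Qed.

Lemma iso (w : int) : lsubset P (scale D w Ad) -> lsubset P (scale D w Pd).
Proof.
move=> hw x hx; rewrite /scale; apply/Pd_char; first exact: hw.
have [a [ha hm]] := hgen hx.
have -> : x = (x - a *: x0) + a *: x0 by rewrite subrK.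
rewrite scalerDr sfDl !sfZl sform_alt !mulr0 addr0 (sfC S) mulrN -sfZl.
by apply: ON; apply: (proj2 (hAd _)) (hw _ hx0P) _ hm.
Qed.

Lemma Pd_lattice : is_lattice D Pd.
Proof.
have [y0 [hy0 hny0]] := y0_ex.
set be := sf y0 x0.
have hpb : O (pi * be) by apply: ppi.
have hnb : ~ O (pi^-1 * (pi * be)) by rewrite mulrA mulVf ?pi0 // mul1r.
have [hi b0] := unit_aux hpb hnb.
have bn0 : be != 0 by apply: contraNneq b0 => ->; rewrite mulr0.
have hpy0 : Pd (pi *: y0).
  apply/Pd_char; first by apply: (OsubZ hAdO) => //; apply: Opi.
  by rewrite sfZl.
have [t [ht hts]] := hAdl.
pose g v := v - (sf v x0 / be) *: y0.
have hg : forall v, Ad v -> Pd (g v) by move=> v hv; case: (red hy0 hny0 hv).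
have hgc : forall v, Ad v -> O (sf v x0 / be) by move=> v hv; case: (red hy0 hny0 hv).
have htA : forall i, (i < size t)%N -> Ad t`_i by move=> i hti; apply/ht; apply: mem_Ospan.
have hPdO : Osubmod D Pd by apply: Osub_perp.
exists (rcons (map g t) (pi *: y0)); split.
- move=> y; split.
  + move=> hy; have [a [ha ea]] := proj1 (OspanE D t y) (proj1 (ht y) (Pd_sub_Ad hy)).
    pose e := \sum_(i < size t) a i * (sf t`_i x0 / be).
    have ey : y = \sum_(i < size t) a i *: g t`_i + e *: y0.
      rewrite ea /g /e scaler_suml -big_split /=; apply: eq_bigr => i _.
      by rewrite scalerBr scalerA subrK.
    have he : Pd (e *: y0).
      have -> : e *: y0 = y - \sum_(i < size t) a i *: g t`_i by rewrite ey addrC addKr.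
      apply: (OsubB hPdO) => //.
      apply: (@Osub_sum _ _ _ _ 'I_(size t) _ (fun i => a i) (fun i => g t`_i) hPdO (fun i => ha i)) => i.
      by apply: hg; apply: htA; exact: ltn_ord.
    have hOe : O (e * be).
      have := he x0 hx0P; by rewrite sfZl.
    set e' := e * be * (pi * be)^-1.
    have he' : O e' by apply: OM.
    have ee : e *: y0 = e' *: (pi *: y0).
      rewrite scalerA /e'; congr (_ *: _); have := pi0 D => p0; field; rewrite bn0 p0 //.
    apply/OspanE; exists (fun j => if (j < size t)%N then a j else e'); split.
      by move=> j; case: ifP.
    rewrite size_rcons size_map big_ord_recr /= ltnn ey ee; congr (_ + _); last first.
      by rewrite nth_rcons size_map ltnn eqxx.
    apply: eq_bigr => i _ /=; rewrite ltn_ord nth_rcons size_map ltn_ord.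
    by rewrite (nth_map 0).
  + move/OspanE => [a [ha ->]].
    apply: (@Osub_sum _ _ _ _ 'I_(size (rcons (map g t) (pi *: y0))) _ (fun i => a i) _ hPdO (fun i => ha i)) => i.
    rewrite nth_rcons size_map; case: ifP => hii; first by rewrite (nth_map 0) //; apply: hg; apply: htA.
    case: ifP => // _; exact: (Osub0 hPdO).
- apply: span_full_sub hts _ => v hv.
  have hvA : Ad v by apply/ht; rewrite -(nth_index 0 hv); apply: mem_Ospan; rewrite index_mem.
  have -> : v = g v + (sf v x0 / be / pi) *: (pi *: y0).
    by rewrite /g scalerA mulfVK ?pi0 // subrK.
  apply: memvD; first by apply: memv_span; rewrite mem_rcons inE map_f ?orbT.
  by apply: memvZ; apply: memv_span; rewrite mem_rcons inE eqxx.
Qed.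

End Dual.

Lemma modE (i c m : int) : (i = c %[mod m])%Z <-> exists z, i = c + m * z.
Proof.
split.
- move/eqP; rewrite eqz_mod_dvd => /dvdzP [q hq]; exists q.
  by rewrite mulrC -hq addrC subrK.
- case=> z ->; apply/eqP; rewrite eqz_mod_dvd; apply/dvdzP; exists z.
  by rewrite addrC addKr mulrC.
Qed.

Section Per.
Variables (L : fieldType) (D : dvr L) (N : vectType L).
Local Notation pi := (dvr_pi D).

Lemma chain_perz (I : int -> Prop) (F : int -> N -> Prop) (m2 : int) :
  (forall i, I i -> I (i + m2)) -> (forall i, I (i + m2) -> I i) ->
  (forall i, I i -> same (F (i + m2)) (fun x => F i (pi *: x))) ->
  forall i z, I i -> same (F (i + m2 * z)) (scale D z (F i)).
Proof.
move=> hI1 hI2 hF.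
have Iz : forall (q : nat) i, I i -> I (i + m2 * q%:Z) /\ I (i - m2 * q%:Z).
  elim=> [|q ih] i hi; first by rewrite !mulr0 addr0 ?subr0 ?oppr0 ?addr0.
  have [h1 h2] := ih i hi.
  split.
  - by rewrite -addn1 PoszD mulrDr mulr1 addrA; apply: hI1.
  - apply: hI2; rewrite -addn1 PoszD mulrDr mulr1 opprD addrA subrK //.
have nat_case : forall (q : nat) i, I i -> same (F (i + m2 * q%:Z)) (scale D q%:Z (F i)).
  elim=> [|q ih] i hi.
    by rewrite mulr0 addr0; apply: same_sym; apply: scale0.
  rewrite -addn1 PoszD mulrDr mulr1 addrA.
  apply: same_trans (hF _ (proj1 (Iz q i hi))) _ => x.
  rewrite /scale; apply: iff_trans (ih i hi (pi *: x)) _.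
  by rewrite /scale scalerA expfzDr ?pi0 // exprz1.
move=> i [q|q] hi; first exact: nat_case.
set i' := i - m2 * q.+1%:Z.
have hi' : I i' by apply: (proj2 (Iz _ _ hi)).
have e : i' + m2 * q.+1%:Z = i by rewrite /i' subrK.
have := nat_case q.+1 i' hi'; rewrite e => h.
have -> : i + m2 * Negz q = i' by rewrite /i' NegzE mulrN.
move=> y; rewrite /scale; apply: iff_sym; apply: iff_trans (h _) _.
by rewrite /scale pzZ NegzE subrr expr0z scale1r.
Qed.

End Per.

Lemma perz (I : int -> Prop) (m2 : int) : (forall i, I i <-> I (i + m2)) ->
  forall i z, I i -> I (i + m2 * z).
Proof.
move=> h.
have Iz : forall (q : nat) i, I i -> I (i + m2 * q%:Z) /\ I (i - m2 * q%:Z).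
  elim=> [|q ih] i hi; first by rewrite !mulr0 addr0 ?subr0 ?oppr0 ?addr0.
  have [h1 h2] := ih i hi.
  split.
  - by rewrite -addn1 PoszD mulrDr mulr1 addrA; apply/(h (i + m2 * q%:Z)).
  - apply/(h (i - m2 * q.+1%:Z)).
    by rewrite -addn1 PoszD mulrDr mulr1 opprD addrA subrK.
move=> i [q|q] hi; first exact: (proj1 (Iz q i hi)).
by rewrite NegzE mulrN; apply: (proj2 (Iz _ _ hi)).
Qed.

Section Main.
Variables (L : fieldType) (D : dvr L) (N : vectType L) (S : symplectic N) (n : nat).
Hypothesis hn : (0 < n)%N.
Variables (J : int -> Prop).
Hypotheses (hJper : forall i, J i <-> J (i + (2 * n)%N%:Z)) (hJsym : forall i, J i <-> J (- i)).
Variables (k l : int).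
Hypotheses (hk : J k) (hk1 : ~ J (k + 1)) (hl : J l) (hkl : k < l)
  (hlmin : forall j, J j -> k < j -> l <= j).
Variables (M : int -> N -> Prop) (d : int).
Local Notation m2 := ((2 * n)%N%:Z).
Local Notation pi := (dvr_pi D).
Local Notation O := (dvr_O D).
Hypotheses (hMlat : forall i, J i -> is_lattice D (M i))
  (hMch : forall i i', J i -> J i' -> i < i' ->
          lsubset (M i) (M i') /\ has_length D (M i) (M i') `|i' - i|%N)
  (hMper : forall i, J i -> same (M (i + m2)) (fun x => M i (pi *: x)))
  (hMd : forall i, J i -> same (perp D S (M i)) (M (- i + m2 * d))).

Lemma m2pos : 0 < m2. Proof. rewrite ltz_nat; lia. Qed.
Lemma m2n0 : m2 != 0. Proof. by rewrite gt_eqF // m2pos. Qed.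

Lemma Jz i z : J i <-> J (i + m2 * z).
Proof.
split; first exact: perz.
move=> h; have := perz hJper (- z) h; by rewrite -addrA -mulrDr subrr mulr0 addr0.
Qed.

Lemma Jrefl i z : J i -> J (- i + m2 * z).
Proof. by move=> h; apply/(Jz (- i) z); apply/(hJsym i). Qed.

Lemma kc_l : k + 1 < l.
Proof.
have : k + 1 != l by apply/eqP => e; apply: hk1; rewrite e.
move: hkl; lia.
Qed.

Lemma Jnot_Kp z : ~ J (k + 1 + m2 * z).
Proof. by move/(Jz (k + 1) z). Qed.
Lemma Jnot_Kn z : ~ J (- (k + 1) + m2 * z).
Proof. by move/(Jz (- (k + 1)) z)/(hJsym (k + 1)). Qed.

Lemma Mper_z i z : J i -> same (M (i + m2 * z)) (scale D z (M i)).
Proof.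
apply: chain_perz => //.
- by move=> j /(hJper j).
- by move=> j /(hJper j).
Qed.

Lemma Minj a b : J a -> J b -> same (M a) (M b) -> a = b.
Proof.
move=> ha hb e; case: (ltgtP a b) => // h.
- have [_ hh] := hMch ha hb h.
  exfalso; apply: (hl_strict hh); first by lia.
  exact: sub_same (same_sym e).
- have [_ hh] := hMch hb ha h.
  exfalso; apply: (hl_strict hh); first by lia.
  exact: sub_same e.
Qed.

Definition Iset i := J i \/ (i = k + 1 %[mod m2])%Z \/ (i = - (k + 1) %[mod m2])%Z.

Lemma Iclass i : Iset i <-> J i \/ (exists z, i = k + 1 + m2 * z) \/ (exists z, i = - (k + 1) + m2 * z).
Proof.
split.
- by case=> [h|[/modE h|/modE h]]; [left|right;left|right;right].
- by case=> [h|[/modE h|/modE h]]; [left|right;left|right;right].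
Qed.

Lemma Iz i z : Iset i -> Iset (i + m2 * z).
Proof.
move/Iclass => [h|[[w ->]|[w ->]]]; apply/Iclass.
- by left; apply/(Jz i z).
- by right; left; exists (w + z); ring.
- by right; right; exists (w + z); ring.
Qed.

Lemma Irefl i z : Iset i -> Iset (- i + m2 * z).
Proof.
move/Iclass => [h|[[w ->]|[w ->]]]; apply/Iclass.
- by left; apply: Jrefl.
- by right; right; exists (z - w); ring.
- by right; left; exists (z - w); ring.
Qed.

Lemma Ishift1 i : Iset i <-> Iset (i + m2).
Proof.
split; first by move=> h; have := Iz 1 h; rewrite mulr1.
by move=> h; have := Iz (-1) h; rewrite -addrA mulrN1 subrr addr0.
Qed.

Lemma fiber_perz (M' : int -> N -> Prop) : selfdual_chain D S n Iset M' ->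
  forall i z, Iset i -> same (M' (i + m2 * z)) (scale D z (M' i)).
Proof.
case=> _ _ hper _; apply: chain_perz => //.
- by move=> j /(Ishift1 j).
- by move=> j /(Ishift1 j).
Qed.

Lemma part1 (M' : int -> N -> Prop) :
  selfdual_chain D S n Iset M' /\ (forall i, J i -> same (M' i) (M i)) ->
  [/\ is_lattice D (M' (k + 1)), lsubset (M k) (M' (k + 1)),
      lsubset (M' (k + 1)) (M l) & dim1 D (M k) (M' (k + 1))].
Proof.
case=> [[hlat hch _ _] hag].
have Ic : Iset (k + 1) by right; left.
have Ik : Iset k by left.
have Il : Iset l by left.
have hkc : k < k + 1 by lia.
have [s1 h1] := hch _ _ Ik Ic hkc.
have [s2 _] := hch _ _ Ic Il kc_l.
split.
- exact: hlat.
- by move=> x /(hag k hk) /s1.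
- by move=> x /s2 /(hag l hl).
- have e : k + 1 - k = 1 by ring.
  rewrite e in h1.
  have h1' := hl_same (hag k hk) (same_refl _) h1.
  have [o1 o2] := hl_Osub h1'.
  exact: step_dim1 o1 o2 (hl1E h1').
Qed.

Lemma fiber_d (M' : int -> N -> Prop) d' : (forall i, J i -> same (M' i) (M i)) ->
  (forall i, Iset i -> same (perp D S (M' i)) (M' (- i + m2 * d'))) -> d' = d.
Proof.
move=> hag hd'.
have hJne : J k := hk.
have j1 : J (- k + m2 * d') by apply: Jrefl.
have j2 : J (- k + m2 * d) by apply: Jrefl.
have e1 : same (M (- k + m2 * d')) (M (- k + m2 * d)).
  apply: same_trans (same_sym (hag _ j1)) _.
  apply: same_trans (same_sym (hd' k (or_introl hk))) _.
  apply: same_trans (perp_same D S (hag k hk)) _.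
  exact: hMd.
have := Minj j1 j2 e1 => /addrI /eqP; rewrite (inj_eq (mulfI m2n0)) => /eqP //.
Qed.

Lemma part2 (M' M'' : int -> N -> Prop) :
  selfdual_chain D S n Iset M' /\ (forall i, J i -> same (M' i) (M i)) ->
  selfdual_chain D S n Iset M'' /\ (forall i, J i -> same (M'' i) (M i)) ->
  same (M' (k + 1)) (M'' (k + 1)) -> forall i, Iset i -> same (M' i) (M'' i).
Proof.
move=> [h' hag'] [h'' hag''] hc.
have Ic : Iset (k + 1) by right; left.
have Kp : forall z, same (M' (k + 1 + m2 * z)) (M'' (k + 1 + m2 * z)).
  move=> z; apply: same_trans (fiber_perz h' z Ic) _.
  apply: same_trans (scale_same D z hc) _.
  exact: same_sym (fiber_perz h'' z Ic).
move=> i /Iclass [hJ|[[z ->]|[z ->]]].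
- exact: same_trans (hag' _ hJ) (same_sym (hag'' _ hJ)).
- exact: Kp.
- have [_ _ _ [d1 hd1]] := h'; have [_ _ _ [d2 hd2]] := h''.
  have ed1 := fiber_d hag' hd1; have ed2 := fiber_d hag'' hd2.
  subst d1 d2.
  set j := k + 1 + m2 * (d - z).
  have Ij : Iset j by apply/Iclass; right; left; exists (d - z).
  have ej : - j + m2 * d = - (k + 1) + m2 * z.
    by rewrite /j; ring.
  have a1 := hd1 j Ij; have a2 := hd2 j Ij; rewrite ej in a1 a2.
  apply: same_trans (same_sym a1) _; apply: same_trans _ a2.
  by rewrite /j; exact: (perp_same D S (Kp (d - z))).
Qed.


Section Part3.
Variables (P : N -> Prop) (x0 : N).
Hypotheses (hPlat : is_lattice D P) (hkP : lsubset (M k) P) (hPl : lsubset P (M l))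
  (hd1 : dim1 D (M k) P)
  (hx0P : P x0) (hx0n : ~ M k x0)
  (hgen : forall y, P y -> exists a, O a /\ M k (y - a *: x0))
  (hpi : forall y, P y -> M k (pi *: y)).

Local Notation c := (k + 1).
Local Notation Ad := (M (- k + m2 * d)).
Local Notation Adl := (M (- l + m2 * d)).
Local Notation Pd := (perp D S P).

Lemma JAd : J (- k + m2 * d). Proof. exact: Jrefl. Qed.
Lemma JAdl : J (- l + m2 * d). Proof. exact: Jrefl. Qed.
Lemma hAd_ : same (perp D S (M k)) Ad. Proof. exact: hMd. Qed.
Lemma hAdd_ : same (perp D S Ad) (M k).
Proof. have := hMd JAd; by rewrite (_ : - (- k + m2 * d) + m2 * d = k); last ring. Qed.
Lemma hMkO : Osubmod D (M k). Proof. exact: Osub_lat (hMlat hk). Qed.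
Lemma hPO : Osubmod D P. Proof. exact: Osub_lat. Qed.
Lemma latAd : is_lattice D Ad. Proof. exact: hMlat JAd. Qed.

Ltac dualfacts := have := hAd_; have := hAdd_; have := hMkO; have := hPO; have := latAd; move=> *.
Ltac dfin := first [exact: hkP | exact: hx0P | exact: hx0n | exact: hgen | exact: hpi | eassumption].

Lemma PdA : lsubset Pd Ad.
Proof. dualfacts; apply: Pd_sub_Ad; dfin. Qed.
Lemma stepPd : step D Pd Ad.
Proof. dualfacts; apply: step_Pd; dfin. Qed.
Lemma PdL : is_lattice D Pd.
Proof. dualfacts; apply: Pd_lattice; dfin. Qed.
Lemma PdDD : same (perp D S Pd) P.
Proof. dualfacts; apply: Pd_dd; dfin. Qed.
Lemma isoW w : lsubset P (scale D w Ad) -> lsubset P (scale D w Pd).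
Proof. dualfacts; move=> h; apply: iso; dfin. Qed.

Lemma stepkP : step D (M k) P.
Proof. exact: dim1_step hMkO hPO hkP hd1. Qed.

Lemma hl_kP : has_length D (M k) P 1.
Proof. exact: hl1 hMkO hPO stepkP. Qed.

Lemma hl_Pl : has_length D P (M l) (`|l - k|%N).-1.
Proof. exact: hl_split_lo (proj2 (hMch hk hl hkl)) hPO stepkP hPl. Qed.

Lemma hl_AdlAd : has_length D Adl Ad `|l - k|%N.
Proof.
have h : - l + m2 * d < - k + m2 * d by lia.
have := proj2 (hMch JAdl JAd h).
by rewrite (_ : - k + m2 * d - (- l + m2 * d) = l - k); last ring.
Qed.

Lemma AdlPd : lsubset Adl Pd.
Proof. by move=> x /(proj2 (hMd hl x)); apply: perp_anti. Qed.

Lemma hl_AdlPd : has_length D Adl Pd (`|l - k|%N).-1.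
Proof. exact: hl_split_hi hl_AdlAd (Osub_perp D S P) stepPd AdlPd. Qed.

Lemma hl_PdAd : has_length D Pd Ad 1.
Proof. exact: hl1 (Osub_perp D S P) (Osub_lat latAd) stepPd. Qed.

Lemma zinj z z' : c + m2 * z = c + m2 * z' -> z = z'.
Proof. by move/addrI/mulfI; apply; apply: m2n0. Qed.

Lemma SC w0 : - c + m2 * d = c + m2 * w0 -> same Pd (scale D w0 P).
Proof.
move=> e.
have e2 : - k + m2 * d + m2 * (- w0) = k + 2.
  by rewrite mulrN; move: e; lia.
have J2 : J (k + 2) by rewrite -e2; exact: (proj1 (Jz _ (- w0)) JAd).
have el : l = k + 2 by have := hlmin J2 ltac:(lia); have := kc_l; lia.
have hMl : same (M l) (scale D (- w0) Ad).
  by have := Mper_z (- w0) JAd; rewrite e2 -el.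
have h1 : lsubset P (scale D (- w0) Pd).
  by apply: isoW => x /hPl /hMl.
have hlP : has_length D P (M l) 1.
  by have := hl_Pl; rewrite el (_ : k + 2 - k = 2) //; ring.
have [_ _ hmax] := hl1E hlP.
have hQO : Osubmod D (scale D (- w0) Pd) by apply: Osub_scale; apply: Osub_perp.
have h2 : lsubset (scale D (- w0) Pd) (M l).
  by move=> x hx; apply/hMl; apply: (scale_sub (PdA)).
case: (hmax _ hQO h1 h2) => eq.
- apply: same_trans (same_sym (scaleKV D w0 Pd)) _.
  exact: scale_same.
- exfalso; have [_ hns _] := stepPd; apply: hns => x hx.
  have e3 := scaleKV D w0 Pd x.
  apply/e3; rewrite /scale; apply/(eq (pi ^ w0 *: x)); apply/hMl.
  by rewrite /scale pzZ addNr expr0z scale1r.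
Qed.

Definition Mn (i : int) : N -> Prop := fun x =>
  (J i /\ M i x) \/
  ((exists z, i = c + m2 * z) /\ exists z, i = c + m2 * z /\ P (pi ^ z *: x)) \/
  (~ (exists z, i = c + m2 * z) /\ exists z, i = - c + m2 * d + m2 * z /\ Pd (pi ^ z *: x)).

Lemma Kp_notJ i : (exists z, i = c + m2 * z) -> ~ J i.
Proof. by case=> z ->; apply: Jnot_Kp. Qed.
Lemma Kn_notJ z : ~ J (- c + m2 * d + m2 * z).
Proof. by rewrite -addrA -mulrDr; apply: Jnot_Kn. Qed.

Lemma MnJ i : J i -> same (Mn i) (M i).
Proof.
move=> hi x; split; last by move=> h; left.
case=> [[]//|[[hK _]|[_ [z [ez _]]]]].
- by exfalso; apply: (Kp_notJ hK).
- by exfalso; move: hi; rewrite ez; apply: Kn_notJ.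
Qed.

Lemma MnKp z : same (Mn (c + m2 * z)) (scale D z P).
Proof.
move=> x; split.
- case=> [[hJ _]|[[_ [z' [ez hP]]]|[hq _]]].
  + by exfalso; apply: (Jnot_Kp hJ).
  + by rewrite (zinj ez).
  + by exfalso; apply: hq; exists z.
- by move=> h; right; left; split; [exists z|exists z].
Qed.

Lemma MnKn z : ~ (exists z', - c + m2 * d + m2 * z = c + m2 * z') ->
  same (Mn (- c + m2 * d + m2 * z)) (scale D z Pd).
Proof.
move=> hq x; split.
- case=> [[hJ _]|[[hK _]|[_ [z' [ez hP]]]]].
  + by exfalso; apply: (Kn_notJ hJ).
  + by exfalso; apply: hq.
  + move: ez => /addrI /mulfI ez; rewrite /scale ez //; exact: m2n0.
- by move=> h; right; right; split => //; exists z.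
Qed.

Lemma classify i : Iset i -> J i \/ (exists z, i = c + m2 * z) \/
  (~ (exists z, i = c + m2 * z) /\ exists z, i = - c + m2 * d + m2 * z).
Proof.
move/Iclass => [h|[h|[w ew]]]; [by left|by right; left|].
case: (classic (exists z, i = c + m2 * z)) => h; first by right; left.
right; right; split => //; exists (w - d); rewrite ew; ring.
Qed.

Lemma scale_succ z (A : N -> Prop) : same (scale D (z + 1) A) (fun x => scale D z A (pi *: x)).
Proof. by move=> x; rewrite /scale scalerA expfzDr ?pi0 // exprz1. Qed.

Lemma Mn_lat i : Iset i -> is_lattice D (Mn i).
Proof.
case/classify => [hJ|[[z ->]|[hnK [z ez]]]].
- exact: lat_same (same_sym (MnJ hJ)) (hMlat hJ).
- exact: lat_same (same_sym (MnKp z)) (lat_scale z hPlat).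
- have hq : ~ (exists z', - c + m2 * d + m2 * z = c + m2 * z') by rewrite -ez.
  rewrite ez; exact: lat_same (same_sym (MnKn hq)) (lat_scale z PdL).
Qed.

Lemma Mn_per i : Iset i -> same (Mn (i + m2)) (fun x => Mn i (pi *: x)).
Proof.
case/classify => [hJ|[[z ->]|[hnK [z ez]]]].
- have hJ' : J (i + m2) by apply/(hJper i).
  apply: same_trans (MnJ hJ') _; apply: same_trans (hMper hJ) _.
  by move=> x; apply: iff_sym; apply: (MnJ hJ).
- rewrite -addrA -{2}(mulr1 m2) -mulrDr.
  apply: same_trans (MnKp _) _; apply: same_trans (scale_succ _ _) _.
  by move=> x; apply: iff_sym; apply: (MnKp z).
- have hq : ~ (exists z', - c + m2 * d + m2 * z = c + m2 * z') by rewrite -ez.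
  have hq' : ~ (exists z', - c + m2 * d + m2 * (z + 1) = c + m2 * z').
    case=> z' e; apply: hq; exists (z' - 1).
    rewrite (_ : c + m2 * (z' - 1) = (c + m2 * z') - m2); last ring.
    rewrite -e; ring.
  rewrite ez (_ : - c + m2 * d + m2 * z + m2 = - c + m2 * d + m2 * (z + 1)); last ring.
  apply: same_trans (MnKn hq') _; apply: same_trans (scale_succ _ _) _.
  by move=> x; apply: iff_sym; apply: (MnKn hq).
Qed.

Lemma Mn_dual i : Iset i -> same (perp D S (Mn i)) (Mn (- i + m2 * d)).
Proof.
case/classify => [hJ|[[z ->]|[hnK [z ez]]]].
- apply: same_trans (perp_same D S (MnJ hJ)) _.
  apply: same_trans (hMd hJ) _.
  exact: same_sym (MnJ (Jrefl _ hJ)).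
- apply: same_trans (perp_same D S (MnKp z)) _.
  apply: same_trans (perp_scale D S _ _) _.
  have e : - (c + m2 * z) + m2 * d = - c + m2 * d + m2 * (- z) by ring.
  rewrite e.
  case: (classic (exists z', - c + m2 * d + m2 * (- z) = c + m2 * z')) => [[z' ez']|hq].
  + have e0 : - c + m2 * d = c + m2 * (z' + z) by rewrite mulrDr addrA -ez'; ring.
    rewrite ez'.
    apply: same_trans (scale_same D (- z) (SC e0)) _.
    apply: same_trans (scaleK D _ _ _) _.
    rewrite (_ : z' + z + - z = z'); last ring.
    exact: same_sym (MnKp z').
  + exact: same_sym (MnKn hq).
- have hq : ~ (exists z', - c + m2 * d + m2 * z = c + m2 * z') by rewrite -ez.
  rewrite ez.
  apply: same_trans (perp_same D S (MnKn hq)) _.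
  apply: same_trans (perp_scale D S _ _) _.
  apply: same_trans (scale_same D _ PdDD) _.
  rewrite (_ : - (- c + m2 * d + m2 * z) + m2 * d = c + m2 * (- z)); last ring.
  exact: same_sym (MnKp _).
Qed.

Lemma Mn_cons i i' : Iset i -> Iset i' -> i < i' ->
  (forall j, Iset j -> i < j -> j < i' -> False) ->
  lsubset (Mn i) (Mn i') /\ has_length D (Mn i) (Mn i') `|i' - i|%N.
Proof.
move=> hi hi' hii' hno.
have nxt : forall j, Iset j -> i < j -> i' <= j.
  move=> j hj h; rewrite leNgt; apply/negP => h2; exact: hno j hj h h2.
have prv : forall j, Iset j -> j < i' -> j <= i.
  move=> j hj h; rewrite leNgt; apply/negP => h2; exact: hno j hj h2 h.
have kl := kc_l.
have fin : forall A B m, same (Mn i) A -> same (Mn i') B -> lsubset A B ->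
    has_length D A B m -> m = `|i' - i|%N ->
    lsubset (Mn i) (Mn i') /\ has_length D (Mn i) (Mn i') `|i' - i|%N.
  move=> A B m eA eB hAB hAB' em; split.
  - by move=> x /eA /hAB /eB.
  - rewrite -em; exact: hl_same (same_sym eA) (same_sym eB) hAB'.
case: (classify hi) => [hJ|[[z ez]|[hnK [z ez]]]].
- case: (classify hi') => [hJ'|[[z' ez']|[hnK' [z' ez']]]].
  + have [s h] := hMch hJ hJ' hii'.
    exact: fin (MnJ hJ) (MnJ hJ') s h erefl.
  + have hJk : J (k + m2 * z') by apply: (proj1 (Jz k z') hk).
    have h1 := prv _ (or_introl hJk) ltac:(lia).
    have ei : i = k + m2 * z' by lia.
    subst i i'.
    apply: (fin _ _ 1%N (same_trans (MnJ hJ) (Mper_z z' hk)) (MnKp z')).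
    * exact: scale_sub hkP.
    * exact: (hl_scale z' hl_kP).
    * lia.
  + have hJr : J (- i + m2 * d + m2 * z').
      by have := Jrefl (d + z') hJ; rewrite mulrDr addrA.
    have h1 := hlmin hJr ltac:(lia).
    have hJl : J (- l + m2 * d + m2 * z') := proj1 (Jz _ z') JAdl.
    have h2 := prv _ (or_introl hJl) ltac:(lia).
    have ei : i = - l + m2 * d + m2 * z' by lia.
    have hq : ~ (exists z'', - c + m2 * d + m2 * z' = c + m2 * z'') by rewrite -ez'.
    subst i i'.
    apply: (fin _ _ _ (same_trans (MnJ hJ) (Mper_z z' JAdl)) (MnKn hq)).
    * exact: scale_sub AdlPd.
    * exact: (hl_scale z' hl_AdlPd).
    * lia.
- case: (classify hi') => [hJ'|[[z' ez']|[hnK' [z' ez']]]].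
  + have hJl : J (l + m2 * z) := proj1 (Jz _ z) hl.
    have h1 := nxt _ (or_introl hJl) ltac:(lia).
    have hJ'' : J (i' + m2 * (- z)) := proj1 (Jz i' (- z)) hJ'.
    have h2 := hlmin hJ'' ltac:(rewrite mulrN; lia).
    have ei : i' = l + m2 * z by move: h2; rewrite mulrN; lia.
    subst i i'.
    apply: (fin _ _ _ (MnKp z) (same_trans (MnJ hJ') (Mper_z z hl))).
    * exact: scale_sub hPl.
    * exact: (hl_scale z hl_Pl).
    * lia.
  + exfalso.
    have hJk : J (k + m2 * z') by apply: (proj1 (Jz k z') hk).
    have h1 := prv _ (or_introl hJk) ltac:(lia).
    have ei : i = k + m2 * z' by lia.
    by apply: (Kp_notJ (ex_intro _ z ez)); rewrite ei.
  + have hJl : J (l + m2 * z) := proj1 (Jz _ z) hl.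
    have h1 := nxt _ (or_introl hJl) ltac:(lia).
    have h1' : i' != l + m2 * z.
      by apply/eqP => e; apply: (Kn_notJ (z := z')); rewrite -ez' e.
    have hJl2 : J (- l + m2 * d + m2 * z') := proj1 (Jz _ z') JAdl.
    have h2 := prv _ (or_introl hJl2) ltac:(lia).
    have h2' : - l + m2 * d + m2 * z' != i.
      by apply/eqP => e; apply: (Kp_notJ (ex_intro _ z ez)); rewrite -e.
    set w := z' - z.
    have hJ2 : J (- k + m2 * d + m2 * w) := proj1 (Jz _ w) JAd.
    have ge := hlmin hJ2 ltac:(rewrite /w mulrBr; lia).
    have ew : - k + m2 * d + m2 * w = l by move: ge; rewrite /w mulrBr; lia.
    have hMl : same (M l) (scale D w Ad) by rewrite -ew; apply: Mper_z; exact: JAd.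
    have hPw : lsubset P (scale D w Pd) by apply: isoW => x /hPl /hMl.
    have hlPw : has_length D P (scale D w Pd) (`|l - k|%N).-1.-1.
      apply: hl_split_hi (hl_same (same_refl _) hMl hl_Pl) _ (step_scale w stepPd) hPw.
      by apply: Osub_scale; apply: Osub_perp.
    have hq : ~ (exists z'', - c + m2 * d + m2 * z' = c + m2 * z'') by rewrite -ez'.
    have eB : same (Mn i') (scale D z (scale D w Pd)).
      rewrite ez'; apply: same_trans (MnKn hq) _.
      apply: same_sym; apply: same_trans (scaleK D _ _ _) _.
      by rewrite /w subrK.
    apply: (fin _ _ _ _ eB).
    * by rewrite ez; exact: MnKp.
    * exact: scale_sub hPw.
    * exact: (hl_scale z hlPw).
    * move: ew; rewrite /w mulrBr ez ez'; lia.
- have hJ1 : J (- k + m2 * d + m2 * z) := proj1 (Jz _ z) JAd.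
  have h := nxt _ (or_introl hJ1) ltac:(lia).
  have ei : i' = - k + m2 * d + m2 * z by lia.
  have hq : ~ (exists z'', - c + m2 * d + m2 * z = c + m2 * z'') by rewrite -ez.
  subst i i'.
  apply: (fin _ _ _ (MnKn hq) (same_trans (MnJ hJ1) (Mper_z z JAd))).
  * exact: scale_sub PdA.
  * exact: (hl_scale z hl_PdAd).
  * lia.
Qed.

Lemma part3 : exists M', (selfdual_chain D S n Iset M' /\ forall i, J i -> same (M' i) (M i))
  /\ same (M' (k + 1)) P.
Proof.
exists Mn; split; [split|].
- split.
  + exact: Mn_lat.
  + apply: chain_of_cons; exact: Mn_cons.
  + exact: Mn_per.
  + exists d; exact: Mn_dual.
- exact: MnJ.
- have := MnKp 0; rewrite mulr0 addr0 => h; exact: same_trans h (scale0 D P).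
Qed.

End Part3.
End Main.

Unset Implicit Arguments.

Theorem lemma2p3 (L : fieldType) (D : dvr L) (N : vectType L)
  (S : symplectic N) (n : nat) (hn : (0 < n)%N)
  (hdim : \dim (fullv : {vspace N}) = (2 * n)%N)
  (J : int -> Prop) (hJne : exists i, J i)
  (hJper : forall i, J i <-> J (i + (2 * n)%N%:Z))
  (hJsym : forall i, J i <-> J (- i))
  (k : int) (hk : J k) (hk1 : ~ J (k + 1))
  (l : int) (hl : J l) (hkl : k < l) (hlmin : forall j, J j -> k < j -> l <= j)
  (M : int -> N -> Prop) (hM : selfdual_chain D S n J M) :
  let I := fun i : int => J i \/ (i = k + 1 %[mod (2 * n)%N%:Z])%Z
                              \/ (i = - (k + 1) %[mod (2 * n)%N%:Z])%Z in
  let fiber := fun M' : int -> N -> Prop =>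
    selfdual_chain D S n I M' /\ forall i, J i -> same (M' i) (M i) in
  let target := fun P : N -> Prop =>
    [/\ is_lattice D P, lsubset (M k) P, lsubset P (M l) & dim1 D (M k) P] in
  [/\ (forall M', fiber M' -> target (M' (k + 1))),
      (forall M' M'', fiber M' -> fiber M'' ->
          same (M' (k + 1)) (M'' (k + 1)) ->
          forall i, I i -> same (M' i) (M'' i))
    & (forall P, target P -> exists M', fiber M' /\ same (M' (k + 1)) P)].
Proof.
move=> I fiber target.
case: hM => hMlat hMch hMper [d hMd].
split.
- move=> M' hf; exact: (part1 hn hk hk1 hl hkl hf).
- move=> M' M'' h' h'' hc i hi.
  exact: (part2 hn hJper hJsym hk hkl hMch hMd h' h'' hc hi).
- move=> P [hPlat hkP hPl hd1].
  have hd1' := hd1; case: hd1' => hpi [x0 [hx0P hx0n hgen]].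
  have hpi' : forall y, P y -> M k (dvr_pi D *: y) by move=> y hy; apply: hpi; exists y.
  exact: (part3 hn hJper hJsym hk hk1 hl hkl hlmin hMlat hMch hMper hMd hPlat hkP hPl hd1 hx0P hx0n hgen hpi').
Qed.
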